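(* Let $q_1,q_2$ each be functions as in the context and define $c(t)=\int_{-\infty}^{\infty}e^{-q_1(v)}e^{-q_2(t-v)}\,dv$ for $t\in\mathbb{R}$. Then $c$ is an even, strictly positive function on $\mathbb{R}$ with $c'(t)<0$ for all $t>0$; equivalently $c(t)=e^{-g(t)}$ for an even function $g$ with $g'(t)>0$ for all $t>0$.
   Context: A function $q:\mathbb{R}\to\mathbb{R}$ is ''as in the context'' if it has the form $q(t)=k\,t^{2m}e^{\mu t^2}\prod_n\left(1+t^2/\beta_n^2\right)$, where $k>0$, $\mu\ge 0$, $m$ is a positive integer, and $(\beta_n)$ is a finite or infinite sequence of nonzero real numbers with $\sum_n \beta_n^{-2}<\infty$ (the product is taken to be $1$ if there are no $\beta_n$), and there exist constants $T>0$ and $\alpha>0$ such that $q(t)>t^{2+\alpha}$ for all real $t\ge T$. *)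

(* Defs.v *)
From Stdlib Require Import Reals Lra List.
Open Scope R_scope.

Fixpoint partial_prod (beta : nat -> R) (t : R) (N : nat) : R :=
  match N with
  | O => 1
  | S N' => partial_prod beta t N' * (1 + t ^ 2 / (beta N') ^ 2)
  end.

Definition finite_prod_data (P : R -> R) : Prop :=
  exists l : list R, Forall (fun b => b <> 0) l /\
    forall t, P t = fold_right (fun b acc => (1 + t ^ 2 / b ^ 2) * acc) 1 l.

Definition infinite_prod_data (P : R -> R) : Prop :=
  exists beta : nat -> R, (forall n, beta n <> 0) /\
    (exists s, Un_cv (sum_f_R0 (fun n => / (beta n) ^ 2)) s) /\
    forall t, Un_cv (partial_prod beta t) (P t).

Definition as_in_context (q : R -> R) : Prop :=
  exists (k mu : R) (m : nat) (P : R -> R),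
    0 < k /\ 0 <= mu /\ (1 <= m)%nat /\
    (finite_prod_data P \/ infinite_prod_data P) /\
    (forall t, q t = k * t ^ (2 * m) * exp (mu * t ^ 2) * P t) /\
    exists T alpha, 0 < T /\ 0 < alpha /\
      forall t, T <= t -> q t > Rpower t (2 + alpha).

Definition improper_integral_R (f : R -> R) (l : R) : Prop :=
  (forall a b, inhabited (Riemann_integrable f a b)) /\
  forall eps, 0 < eps -> exists M, forall a b (pr : Riemann_integrable f a b),
    a <= - M -> M <= b -> Rabs (RiemannInt pr - l) < eps.

(* Main.v *)
Require Import Defs.
From Stdlib Require Import Reals.
From Stdlib Require Import Lra Lia List Classical ClassicalEpsilon FunctionalExtensionality.
Open Scope R_scope.

Definition cont (f:R->R) := forall x, continuity_pt f x.

Lemma RI_cont f a b : cont f -> Riemann_integrable f a b.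
Proof.
  intro H. destruct (Rle_dec a b).
  - apply continuity_implies_RiemannInt; auto.
  - apply RiemannInt_P1, continuity_implies_RiemannInt; [lra| auto].
Qed.

Definition Int (f:R->R) (a b:R) : R :=
  match excluded_middle_informative (inhabited (Riemann_integrable f a b)) with
  | left H => RiemannInt (epsilon H (fun _ => True))
  | right _ => 0 end.

Lemma Int_RI {f a b} (pr : Riemann_integrable f a b) : Int f a b = RiemannInt pr.
Proof.
  unfold Int. destruct excluded_middle_informative as [H|H].
  - apply RiemannInt_P5.
  - exfalso; apply H; constructor; exact pr.
Qed.

Lemma Int_chasles f a b c : cont f -> Int f a b + Int f b c = Int f a c.
Proof.
  intro H. rewrite (Int_RI (RI_cont f a b H)), (Int_RI (RI_cont f b c H)), (Int_RI (RI_cont f a c H)).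
  apply RiemannInt_P26.
Qed.

Lemma deriv_local f g x l d : 0 < d -> (forall y, Rabs (y - x) < d -> f y = g y) ->
  derivable_pt_lim g x l -> derivable_pt_lim f x l.
Proof.
  intros Hd Heq Hg eps Heps. destruct (Hg eps Heps) as [del Hdel].
  assert (Hm : 0 < Rmin del d) by (apply Rmin_pos; [apply cond_pos|lra]).
  exists (mkposreal _ Hm). intros h Hh Hhd. simpl in Hhd.
  rewrite (Heq (x+h)), (Heq x).
  - apply Hdel; auto. apply Rlt_le_trans with (1:=Hhd), Rmin_l.
  - rewrite Rminus_diag, Rabs_R0; lra.
  - replace (x+h-x) with h by ring. apply Rlt_le_trans with (1:=Hhd), Rmin_r.
Qed.

Lemma Int_deriv f a x : cont f -> derivable_pt_lim (fun y => Int f a y) x (f x).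
Proof.
  intro Hf.
  assert (h : x - 1 <= x + 1) by lra.
  assert (C0 : forall y, x - 1 <= y <= x + 1 -> continuity_pt f y) by (intros; apply Hf).
  apply deriv_local with (g := fun y => Int f a (x-1) + primitive h (FTC_P1 h C0) y) (d:=1); [lra| |].
  - intros y Hy. apply Rabs_def2 in Hy.
    rewrite <- (Int_chasles f a (x-1) y Hf). f_equal.
    unfold primitive. destruct (Rle_dec (x-1) y); [|lra]. destruct (Rle_dec y (x+1)); [|lra].
    apply Int_RI.
  - replace (f x) with (0 + f x) by ring. apply derivable_pt_lim_plus.
    + apply derivable_pt_lim_const.
    + apply RiemannInt_P28. lra.
Qed.

Lemma deriv0_const H a b : (forall x, derivable_pt_lim H x 0) -> H b = H a.
Proof.
  intro D. destruct (Rtotal_order a b) as [Hab|[Hab|Hab]].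
  - destruct (MVT_cor2 H (fun _ => 0) a b Hab) as [c [Hc _]]; [intros; apply D|]. lra.
  - subst; auto.
  - destruct (MVT_cor2 H (fun _ => 0) b a Hab) as [c [Hc _]]; [intros; apply D|]. lra.
Qed.

Lemma Int_aa f a : cont f -> Int f a a = 0.
Proof. intro Hf. pose proof (Int_chasles f a a a Hf). lra. Qed.

Lemma Int_FTC f G a b : cont f -> (forall x, derivable_pt_lim G x (f x)) -> Int f a b = G b - G a.
Proof.
  intros Hf HG.
  assert (E := deriv0_const (fun y => G y - Int f a y) a b).
  simpl in E. rewrite (Int_aa f a Hf) in E.
  assert (G b - Int f a b = G a - 0). { apply E. intro x.
    replace 0 with (f x - f x) by ring. apply derivable_pt_lim_minus; auto. apply Int_deriv; auto. }
  lra.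
Qed.

Lemma MVT_gen f d x y : (forall z, derivable_pt_lim f z (d z)) ->
  exists c, f y - f x = d c * (y - x) /\ Rmin x y <= c <= Rmax x y.
Proof.
  intro D. destruct (Rtotal_order x y) as [Hab|[Hab|Hab]].
  - destruct (MVT_cor2 f d x y Hab) as [c [Hc Hc2]]; [intros; apply D|].
    exists c. split; auto. rewrite Rmin_left, Rmax_right; lra.
  - subst. exists y. split. ring. rewrite Rmin_left, Rmax_right; lra.
  - destruct (MVT_cor2 f d y x Hab) as [c [Hc Hc2]]; [intros; apply D|].
    exists c. split. lra. rewrite Rmin_right, Rmax_left; lra.
Qed.

Lemma Int_mvt f a b : cont f -> a < b -> exists c, a < c < b /\ Int f a b = f c * (b - a).
Proof.
  intros Hf Hab. destruct (MVT_cor2 (fun y => Int f a y) f a b Hab) as [c [Hc Hc2]].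
  - intros; apply Int_deriv; auto.
  - exists c; split; auto. rewrite Int_aa in Hc; auto. lra.
Qed.

Lemma cont_plus f g : cont f -> cont g -> cont (fun x => f x + g x).
Proof. intros Hf Hg x. apply (continuity_pt_plus f g); auto. Qed.
Lemma cont_minus f g : cont f -> cont g -> cont (fun x => f x - g x).
Proof. intros Hf Hg x. apply (continuity_pt_minus f g); auto. Qed.
Lemma cont_mult f g : cont f -> cont g -> cont (fun x => f x * g x).
Proof. intros Hf Hg x. apply (continuity_pt_mult f g); auto. Qed.
Lemma cont_const c : cont (fun _ => c).
Proof. intro x. apply continuity_pt_const. intros a b; auto. Qed.
Lemma cont_scal c f : cont f -> cont (fun x => c * f x).
Proof. intros Hf. apply cont_mult; auto. apply cont_const. Qed.
Lemma cont_comp f g : cont f -> cont g -> cont (fun x => f (g x)).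
Proof. intros Hf Hg x. apply (continuity_pt_comp g f); auto. Qed.
Lemma cont_id : cont (fun x => x).
Proof. intro x. apply derivable_continuous_pt, derivable_pt_id. Qed.
Lemma cont_sub s : cont (fun x => s - x).
Proof. apply cont_minus. apply cont_const. apply cont_id. Qed.
Lemma cont_deriv f d : (forall x, derivable_pt_lim f x (d x)) -> cont f.
Proof. intros D x. apply derivable_continuous_pt. exists (d x). apply D. Qed.

Lemma Int_plus f g a b : cont f -> cont g -> Int (fun x => f x + g x) a b = Int f a b + Int g a b.
Proof.
  intros Hf Hg. rewrite (Int_FTC _ (fun y => Int f a y + Int g a y) a b).
  - rewrite !Int_aa; auto. ring.
  - apply cont_plus; auto.
  - intro x. apply derivable_pt_lim_plus; apply Int_deriv; auto.
Qed.

Lemma Int_minus f g a b : cont f -> cont g -> Int (fun x => f x - g x) a b = Int f a b - Int g a b.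
Proof.
  intros Hf Hg. rewrite (Int_FTC _ (fun y => Int f a y - Int g a y) a b).
  - rewrite !Int_aa; auto. ring.
  - apply cont_minus; auto.
  - intro x. apply derivable_pt_lim_minus; apply Int_deriv; auto.
Qed.

Lemma Int_scal c f a b : cont f -> Int (fun x => c * f x) a b = c * Int f a b.
Proof.
  intros Hf. rewrite (Int_FTC _ (fun y => c * Int f a y) a b).
  - rewrite !Int_aa; auto. ring.
  - apply cont_scal; auto.
  - intro x. apply derivable_pt_lim_scal; apply Int_deriv; auto.
Qed.

Lemma Int_ext f g a b : (forall x, f x = g x) -> Int f a b = Int g a b.
Proof. intro H. replace f with g; auto. apply functional_extensionality; auto. Qed.

Lemma Int_nonneg f a b : cont f -> a <= b -> (forall x, a <= x <= b -> 0 <= f x) -> 0 <= Int f a b.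
Proof.
  intros Hf Hab H. destruct Hab as [Hab|Hab].
  - destruct (Int_mvt f a b Hf Hab) as [c [Hc E]]. rewrite E. apply Rmult_le_pos. apply H; lra. lra.
  - subst. rewrite Int_aa; auto. lra.
Qed.

Lemma Int_le f g a b : cont f -> cont g -> a <= b -> (forall x, a <= x <= b -> f x <= g x) ->
  Int f a b <= Int g a b.
Proof.
  intros Hf Hg Hab H. assert (0 <= Int (fun x => g x - f x) a b).
  { apply Int_nonneg; auto. apply cont_minus; auto. intros x Hx; specialize (H x Hx); lra. }
  rewrite Int_minus in H0; auto. lra.
Qed.

Lemma abs_le_inv x a : Rabs x <= a -> - a <= x <= a.
Proof. intros H. split. pose proof (Rle_abs (-x)). rewrite Rabs_Ropp in H0. lra. pose proof (Rle_abs x). lra. Qed.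

Lemma Int_abs_le f g a b : cont f -> cont g -> a <= b -> (forall x, a <= x <= b -> Rabs (f x) <= g x) ->
  Rabs (Int f a b) <= Int g a b.
Proof.
  intros Hf Hg Hab H. apply Rabs_le. split.
  - assert (Int (fun x => -1 * g x) a b <= Int f a b).
    { apply Int_le; auto. apply cont_scal; auto. intros x Hx. specialize (H x Hx).
      apply abs_le_inv in H. lra. }
    rewrite Int_scal in H0; auto. lra.
  - apply Int_le; auto. intros x Hx. specialize (H x Hx). apply abs_le_inv in H. lra.
Qed.

Lemma Int_subst h s a b : cont h -> Int (fun v => h (s - v)) a b = Int h (s - b) (s - a).
Proof.
  intro Hh. rewrite (Int_FTC _ (fun v => - Int h 0 (s - v)) a b).
  - rewrite <- (Int_chasles h (s-b) 0 (s-a) Hh).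
    pose proof (Int_chasles h (s-b) 0 (s-b) Hh). rewrite Int_aa in H; auto. lra.
  - apply cont_comp; auto. apply cont_sub.
  - intro x. replace (h (s - x)) with (- (h (s - x) * (0 - 1))) by ring.
    apply derivable_pt_lim_opp.
    apply (derivable_pt_lim_comp (fun v => s - v) (fun y => Int h 0 y)).
    + apply derivable_pt_lim_minus. apply derivable_pt_lim_const. apply derivable_pt_lim_id.
    + apply Int_deriv; auto.
Qed.

Lemma exp_small K eps T : 0 <= K -> 0 < eps -> exists X, T <= X /\ 0 < X /\ forall x, X <= x -> K * exp (-x) < eps.
Proof.
  intros HK He. exists (Rmax T (K/eps) + 1 + Rabs T). split; [|split].
  - pose proof (Rmax_l T (K/eps)). pose proof (Rabs_pos T). lra.
  - pose proof (Rmax_l T (K/eps)). pose proof (Rle_abs (-T)). rewrite Rabs_Ropp in H0. lra.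
  - intros x Hx. pose proof (Rmax_r T (K/eps)). pose proof (Rabs_pos T).
    rewrite exp_Ropp. pose proof (exp_pos x). pose proof (exp_ineq1_le x).
    apply Rmult_lt_reg_r with (exp x); auto. rewrite Rmult_assoc, Rinv_l, Rmult_1_r by lra.
    assert (K / eps < x) by lra.
    assert (K < eps * x). { apply Rmult_lt_reg_r with (/eps). apply Rinv_0_lt_compat; lra.
      unfold Rdiv in H3. replace (eps * x * / eps) with x by (field; lra). lra. }
    assert (eps * x <= eps * exp x) by (apply Rmult_le_compat_l; lra). lra.
Qed.

Lemma exp_le a b : a <= b -> exp a <= exp b.
Proof. intro H. destruct (Rle_lt_or_eq_dec _ _ H). apply Rlt_le, exp_increasing; auto. subst; lra. Qed.

Lemma cont_exp : cont exp.
Proof. intro x. apply derivable_continuous_pt, derivable_pt_exp. Qed.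

Definition tailb (h : R -> R) (M T : R) := forall x, T <= Rabs x -> Rabs (h x) <= M * exp (- Rabs x).

Lemma tail_right h M T b b' : cont h -> 0 <= M -> 0 <= T -> tailb h M T -> T <= b -> b <= b' ->
  Rabs (Int h b b') <= M * exp (-b).
Proof.
  intros Hh HM HT Ht Hb Hbb.
  eapply Rle_trans. apply (Int_abs_le h (fun x => M * exp (-x))); auto.
  - apply cont_scal. apply cont_comp. apply cont_exp. intro x; apply (continuity_pt_opp (fun x => x)), cont_id.
  - intros x Hx. pose proof (Ht x). rewrite (Rabs_right x) in H by lra. apply H. lra.

  - rewrite (Int_FTC _ (fun x => - M * exp (- x))).
    + pose proof (exp_pos (-b')). assert (0 <= M * exp (-b')) by (apply Rmult_le_pos; lra). lra.
    + apply cont_scal. apply cont_comp. apply cont_exp. intro x; apply (continuity_pt_opp (fun x => x)), cont_id.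
    + intro x. replace (M * exp (-x)) with (-M * (exp (-x) * (-1))) by ring.
      apply derivable_pt_lim_scal.
      apply (derivable_pt_lim_comp (fun x => -x) exp). apply derivable_pt_lim_opp, derivable_pt_lim_id.
      apply derivable_pt_lim_exp.
Qed.

Lemma tailb_refl h M T : tailb h M T -> tailb (fun v => h (0 - v)) M T.
Proof. intros H x Hx. replace (0 - x) with (-x) by ring. rewrite <- (Rabs_Ropp x). apply H. rewrite Rabs_Ropp; auto. Qed.

Lemma cont_refl h : cont h -> cont (fun v => h (0 - v)).
Proof. intro; apply cont_comp; auto; apply cont_sub. Qed.

Lemma tail_left h M T a a' : cont h -> 0 <= M -> 0 <= T -> tailb h M T -> a <= -T -> a' <= a ->
  Rabs (Int h a' a) <= M * exp a.
Proof.
  intros Hh HM HT Ht Ha Haa.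
  replace (Int h a' a) with (Int (fun v => h (0 - v)) (-a) (-a')).
  - replace a with (- - a) at 2 by ring. apply tail_right with (T:=T) (M:=M); auto. apply cont_refl; auto. apply tailb_refl; auto. lra. lra.

  - rewrite Int_subst; auto. f_equal; ring.
Qed.

Lemma cv_bound u L x K N : Un_cv u L -> (forall n, (N <= n)%nat -> Rabs (x - u n) <= K) -> Rabs (x - L) <= K.
Proof.
  intros Hu Hb. destruct (Rle_dec (Rabs (x - L)) K) as [|Hn]; auto. exfalso.
  destruct (Hu (Rabs (x - L) - K)) as [N0 HN0]. lra.
  specialize (HN0 (max N N0) (Nat.le_max_r _ _)). specialize (Hb (max N N0) (Nat.le_max_l _ _)).
  unfold Rdist in HN0.
  pose proof (Rabs_triang (x - u (max N N0)) (u (max N N0) - L)).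
  replace (x - u (max N N0) + (u (max N N0) - L)) with (x - L) in H by ring. lra.
Qed.

Lemma impr_exists h M T : cont h -> 0 <= M -> 0 <= T -> tailb h M T ->
  exists l, forall a b, a <= -T -> T <= b -> Rabs (Int h a b - l) <= M * (exp a + exp (-b)).
Proof.
  intros Hh HM HT Ht.
  set (u := fun n => Int h 0 (INR n)). set (v := fun n => Int h (- INR n) 0).
  assert (Cu : Cauchy_crit u).
  { intros eps He. destruct (exp_small M eps T HM He) as [X [HX1 [HX2 HX3]]].
    destruct (INR_unbounded X) as [N HN]. exists N. intros n m Hn Hm. unfold Rdist, u.
    assert (INR N <= INR n) by (apply le_INR; lia). assert (INR N <= INR m) by (apply le_INR; lia).
    rewrite <- (Int_chasles h 0 (INR m) (INR n) Hh).
    replace (Int h 0 (INR m) + Int h (INR m) (INR n) - Int h 0 (INR m)) with (Int h (INR m) (INR n)) by ring.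
    destruct (Rle_dec (INR m) (INR n)).
    - eapply Rle_lt_trans. apply tail_right with (T:=T) (M:=M); auto; lra. apply HX3; lra.
    - pose proof (Int_chasles h (INR m) (INR n) (INR m) Hh). rewrite Int_aa in H1; auto.
      replace (Int h (INR m) (INR n)) with (- Int h (INR n) (INR m)) by lra. rewrite Rabs_Ropp.
      eapply Rle_lt_trans. apply tail_right with (T:=T) (M:=M); auto; lra. apply HX3; lra. }
  assert (Cv : Cauchy_crit v).
  { intros eps He. destruct (exp_small M eps T HM He) as [X [HX1 [HX2 HX3]]].
    destruct (INR_unbounded X) as [N HN]. exists N. intros n m Hn Hm. unfold Rdist, v.
    assert (INR N <= INR n) by (apply le_INR; lia). assert (INR N <= INR m) by (apply le_INR; lia).
    rewrite <- (Int_chasles h (- INR n) (- INR m) 0 Hh).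
    replace (Int h (- INR n) (- INR m) + Int h (- INR m) 0 - Int h (- INR m) 0) with (Int h (- INR n) (- INR m)) by ring.
    destruct (Rle_dec (INR m) (INR n)).
    - eapply Rle_lt_trans. apply tail_left with (T:=T) (M:=M); auto; lra.
      replace (- INR m) with (- (INR m)) by ring. apply HX3; lra.
    - pose proof (Int_chasles h (-INR m) (-INR n) (-INR m) Hh). rewrite Int_aa in H1; auto.
      replace (Int h (-INR n) (-INR m)) with (- Int h (-INR m) (-INR n)) by lra. rewrite Rabs_Ropp.
      eapply Rle_lt_trans. apply tail_left with (T:=T) (M:=M); auto; lra. apply HX3; lra. }
  destruct (R_complete u Cu) as [Lu HLu]. destruct (R_complete v Cv) as [Lv HLv].
  exists (Lv + Lu). intros a b Ha Hb.
  assert (B1 : Rabs (Int h 0 b - Lu) <= M * exp (-b)).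
  { destruct (INR_unbounded b) as [N HN]. apply cv_bound with u N; auto. intros n Hn. unfold u.
    assert (INR N <= INR n) by (apply le_INR; lia).
    rewrite <- (Int_chasles h 0 b (INR n) Hh).
    replace (Int h 0 b - (Int h 0 b + Int h b (INR n))) with (- Int h b (INR n)) by ring.
    rewrite Rabs_Ropp. apply tail_right with (T:=T) (M:=M); auto; lra. }
  assert (B2 : Rabs (Int h a 0 - Lv) <= M * exp a).
  { destruct (INR_unbounded (-a)) as [N HN]. apply cv_bound with v N; auto. intros n Hn. unfold v.
    assert (INR N <= INR n) by (apply le_INR; lia).
    rewrite <- (Int_chasles h (- INR n) a 0 Hh).
    replace (Int h a 0 - (Int h (- INR n) a + Int h a 0)) with (- Int h (- INR n) a) by ring.
    rewrite Rabs_Ropp. apply tail_left with (T:=T) (M:=M); auto; lra. }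
  rewrite <- (Int_chasles h a 0 b Hh).
  replace (Int h a 0 + Int h 0 b - (Lv + Lu)) with ((Int h a 0 - Lv) + (Int h 0 b - Lu)) by ring.
  eapply Rle_trans. apply Rabs_triang. lra.
Qed.

Lemma impr_of_bound h M T l : cont h -> 0 <= M ->
  (forall a b, a <= -T -> T <= b -> Rabs (Int h a b - l) <= M * (exp a + exp (-b))) ->
  improper_integral_R h l.
Proof.
  intros Hh HM Hb. split.
  - intros a b. constructor. apply RI_cont; auto.
  - intros eps He. destruct (exp_small (2*M) eps T) as [X [HX1 [HX2 HX3]]]; try lra.
    exists X. intros a b pr Ha Hbb. rewrite <- (Int_RI pr).
    eapply Rle_lt_trans. apply Hb; lra.
    assert (exp a <= exp (-X)). { destruct (Rle_lt_or_eq_dec a (-X)); try lra. left; apply exp_increasing; auto. subst; lra. }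
    assert (exp (-b) <= exp (-X)). { destruct (Rle_lt_or_eq_dec (-b) (-X)); try lra. left; apply exp_increasing; auto. rewrite e; lra. }
    specialize (HX3 X (Rle_refl _)).
    assert (M * (exp a + exp (-b)) <= 2 * M * exp (-X)).
    { replace (2 * M * exp (-X)) with (M * (exp (-X) + exp (-X))) by ring. apply Rmult_le_compat_l; lra. }
    lra.
Qed.

Lemma bound_of_impr h M T l : cont h -> 0 <= M -> 0 <= T -> tailb h M T -> improper_integral_R h l ->
  forall a b, a <= -T -> T <= b -> Rabs (Int h a b - l) <= M * (exp a + exp (-b)).
Proof.
  intros Hh HM HT Ht [_ Hi] a b Ha Hb.
  apply Rnot_lt_le. intro Hc.
  set (eps := Rabs (Int h a b - l) - M * (exp a + exp (-b))).
  destruct (Hi eps) as [X HX]. unfold eps; lra.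
  set (a' := Rmin a (- Rabs X)). set (b' := Rmax b (Rabs X)).
  assert (a' <= a) by apply Rmin_l. assert (b <= b') by apply Rmax_l.
  assert (a' <= - X). { unfold a'. eapply Rle_trans. apply Rmin_r. pose proof (Rle_abs X). lra. }
  assert (X <= b'). { unfold b'. eapply Rle_trans. 2: apply Rmax_r. apply Rle_abs. }
  specialize (HX a' b' (RI_cont h a' b' Hh) H1 H2). rewrite <- Int_RI in HX.
  rewrite <- (Int_chasles h a' a b' Hh), <- (Int_chasles h a b b' Hh) in HX.
  pose proof (tail_left h M T a a' Hh HM HT Ht Ha H).
  pose proof (tail_right h M T b b' Hh HM HT Ht Hb H0).
  pose proof (Rabs_triang (Int h a b - l) (Int h a' a + Int h b b')).
  pose proof (Rabs_triang (Int h a' a) (Int h b b')).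
  replace (Int h a' a + (Int h a b + Int h b b') - l) with ((Int h a b - l) + (Int h a' a + Int h b b')) in HX by ring.
  pose proof (Rabs_triang_inv (Int h a b - l + (Int h a' a + Int h b b')) (- (Int h a' a + Int h b b'))).
  rewrite Rabs_Ropp in H7.
  replace (Int h a b - l + (Int h a' a + Int h b b') - - (Int h a' a + Int h b b')) with
    (Int h a b - l + 2 * (Int h a' a + Int h b b')) in H7 by ring.
  unfold eps in HX.
  pose proof (Rabs_triang (Int h a b - l + (Int h a' a + Int h b b')) (- (Int h a' a + Int h b b'))).
  rewrite Rabs_Ropp in H8.
  replace (Int h a b - l + (Int h a' a + Int h b b') + - (Int h a' a + Int h b b')) with (Int h a b - l) in H8 by ring.
  lra.
Qed.

Lemma le_small y z K X0 : 0 <= K -> (forall X, X0 <= X -> y <= z + K * exp (- X)) -> y <= z.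
Proof.
  intros HK H. apply Rnot_lt_le. intro Hc.
  destruct (exp_small K (y - z) X0 HK) as [X [H1 [_ H3]]]. lra.
  specialize (H X H1). specialize (H3 X (Rle_refl _)). lra.
Qed.

Lemma eq_small x y K X0 : 0 <= K -> (forall X, X0 <= X -> Rabs (x - y) <= K * exp (- X)) -> x = y.
Proof.
  intros HK H. apply Rle_antisym.
  - apply (le_small x y K X0 HK). intros X HX. specialize (H X HX). apply abs_le_inv in H. lra.
  - apply (le_small y x K X0 HK). intros X HX. specialize (H X HX). apply abs_le_inv in H. lra.
Qed.

Definition good (f d : R -> R) (T B : R) :=
  (forall x, derivable_pt_lim f x (d x)) /\ cont d /\
  (forall x, f (-x) = f x) /\ (forall x, 0 < f x <= 1) /\
  0 <= T /\ (forall x, T <= Rabs x -> f x <= exp (- Rabs x)) /\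
  0 <= B /\ (forall x, Rabs (d x) <= B) /\ (forall x, 0 < x -> d x < 0).

Lemma good_mono f d T B T' B' : good f d T B -> T <= T' -> B <= B' -> good f d T' B'.
Proof.
  intros (H1&H2&H3&H4&H5&H6&H7&H8&H9) HT HB. repeat split; auto; try lra.
  - apply H4. - apply H4. - intros x Hx; apply H6; lra. - intro x; specialize (H8 x); lra.
Qed.

Lemma good_cont f d T B : good f d T B -> cont f.
Proof. intros (H1&_). apply cont_deriv with d; auto. Qed.

Lemma good_tail f d T B : good f d T B -> tailb f 1 T.
Proof. intros (H1&H2&H3&H4&H5&H6&_) x Hx. rewrite Rabs_right. rewrite Rmult_1_l; auto. destruct (H4 x); lra. Qed.

Lemma good_odd f d T B x : good f d T B -> d (- x) = - d x.
Proof.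
  intros (H1&H2&H3&_).
  assert (derivable_pt_lim f x (d (-x) * -1)).
  { replace f with (fun y => f (- y)) at 1 by (apply functional_extensionality; auto).
    apply (derivable_pt_lim_comp (fun y => -y) f). apply derivable_pt_lim_opp, derivable_pt_lim_id. apply H1. }
  pose proof (uniqueness_limite f x _ _ H (H1 x)). lra.
Qed.

Lemma good_dec f d T B x y : good f d T B -> 0 <= x < y -> f y < f x.
Proof.
  intros (H1&_&_&_&_&_&_&_&H9) Hxy. destruct (MVT_cor2 f d x y) as [c [Hc Hc2]]. lra. intros; auto.
  specialize (H9 c ltac:(lra)). assert (d c * (y - x) < 0). { apply Rmult_neg_pos; lra. } lra.
Qed.

Lemma cont_conv f1 f2 t : cont f1 -> cont f2 -> cont (fun v => f1 v * f2 (t - v)).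
Proof. intros. apply cont_mult; auto. apply cont_comp; auto. apply cont_sub. Qed.

Lemma tail_conv f1 d1 f2 d2 T B t : good f1 d1 T B -> good f2 d2 T B -> tailb (fun v => f1 v * f2 (t - v)) 1 T.
Proof.
  intros G1 G2 x Hx. pose proof (good_tail _ _ _ _ G1 x Hx).
  destruct G1 as (_&_&_&H1&_). destruct G2 as (_&_&_&H2&_).
  destruct (H1 x). destruct (H2 (t - x)).
  rewrite Rabs_right. 2: { apply Rle_ge, Rmult_le_pos; lra. }
  rewrite Rabs_right in H by lra.
  assert (f1 x * f2 (t - x) <= f1 x * 1) by (apply Rmult_le_compat_l; lra). lra.
Qed.

Definition Cb (f1 f2 c : R -> R) T := forall t a b, a <= -T -> T <= b ->
  Rabs (Int (fun v => f1 v * f2 (t - v)) a b - c t) <= 1 * (exp a + exp (- b)).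

Lemma conv_exists f1 d1 f2 d2 T B : good f1 d1 T B -> good f2 d2 T B -> { c | Cb f1 f2 c T }.
Proof.
  intros G1 G2.
  assert (forall t, exists l, forall a b, a <= -T -> T <= b ->
    Rabs (Int (fun v => f1 v * f2 (t - v)) a b - l) <= 1 * (exp a + exp (- b))).
  { intro t. apply impr_exists. apply cont_conv; eapply good_cont; eauto. lra.
    destruct G1 as (_&_&_&_&H&_); auto. eapply tail_conv; eauto. }
  exists (fun t => proj1_sig (constructive_indefinite_description _ (H t))).
  intros t. exact (proj2_sig (constructive_indefinite_description _ (H t))).
Qed.

Lemma abs_tri3 x y z : Rabs (x - z) <= Rabs (x - y) + Rabs (y - z).
Proof. replace (x - z) with ((x - y) + (y - z)) by ring. apply Rabs_triang. Qed.

Lemma Rabs_minus_sym' x y : Rabs (x - y) = Rabs (y - x).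
Proof. apply Rabs_minus_sym. Qed.

Lemma conv_even f1 d1 f2 d2 T B c : good f1 d1 T B -> good f2 d2 T B -> Cb f1 f2 c T ->
  forall t, c (- t) = c t.
Proof.
  intros G1 G2 Hc t.
  assert (C1 := good_cont _ _ _ _ G1). assert (C2 := good_cont _ _ _ _ G2).
  destruct G1 as (_&_&E1&_&HT&_). destruct G2 as (_&_&E2&_).
  assert (EI : forall X, Int (fun v => f1 v * f2 (- t - v)) (-X) X = Int (fun v => f1 v * f2 (t - v)) (-X) X).
  { intro X. rewrite (Int_ext _ (fun v => (fun w => f1 w * f2 (t - w)) (0 - v))).
    - rewrite (Int_subst (fun w => f1 w * f2 (t - w)) 0) by (apply cont_conv; auto). f_equal; ring.
    - intro v. simpl. replace (0 - v) with (-v) by ring. rewrite E1. f_equal.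
      rewrite <- E2. f_equal. ring. }
  apply (eq_small _ _ 4 T). lra. intros X HX.
  eapply Rle_trans. apply abs_tri3 with (y := Int (fun v => f1 v * f2 (t - v)) (-X) X).
  pose proof (Hc t (-X) X ltac:(lra) HX). pose proof (Hc (-t) (-X) X ltac:(lra) HX).
  rewrite EI in H0. rewrite Rabs_minus_sym in H0. lra.
Qed.

Lemma conv_pos f1 d1 f2 d2 T B c : good f1 d1 T B -> good f2 d2 T B -> Cb f1 f2 c T ->
  forall t, 0 < c t.
Proof.
  intros G1 G2 Hc t.
  assert (C1 := good_cont _ _ _ _ G1). assert (C2 := good_cont _ _ _ _ G2).
  destruct G1 as (_&_&_&P1&HT&_). destruct G2 as (_&_&_&P2&_).
  set (h := fun v => f1 v * f2 (t - v)).
  assert (Ch : cont h) by (apply cont_conv; auto).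
  assert (hp : forall v, 0 < h v) by (intro v; unfold h; destruct (P1 v); destruct (P2 (t - v)); apply Rmult_lt_0_compat; lra).
  destruct (Int_mvt h (-1) 1 Ch ltac:(lra)) as [xi [_ Hm]].
  assert (Hm0 : 0 < Int h (-1) 1) by (rewrite Hm; specialize (hp xi); lra).
  apply Rlt_le_trans with (Int h (-1) 1); auto.
  apply (le_small _ _ 2 (Rmax T 1)). lra. intros X HX.
  pose proof (Rmax_l T 1). pose proof (Rmax_r T 1).
  pose proof (Hc t (-X) X ltac:(lra) ltac:(lra)). fold h in H1. apply abs_le_inv in H1.
  rewrite <- (Int_chasles h (-X) (-1) X Ch), <- (Int_chasles h (-1) 1 X Ch) in H1.
  assert (0 <= Int h (-X) (-1)) by (apply Int_nonneg; auto; try lra; intros; apply Rlt_le, hp).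
  assert (0 <= Int h 1 X) by (apply Int_nonneg; auto; try lra; intros; apply Rlt_le, hp).
  replace (- - X) with X in H1 by ring. lra.
Qed.

Lemma beta_mvt f d x h : (forall z, derivable_pt_lim f z (d z)) -> h <> 0 ->
  exists xi, (f (x + h) - f x) / h = d xi /\ Rabs (xi - x) <= Rabs h.
Proof.
  intros D Hh. destruct (MVT_gen f d x (x + h) D) as [c [Hc Hc2]].
  exists c. split.
  - rewrite Hc. field_simplify; auto. replace (x + h - x) with h by ring. field. auto.
  - destruct (Rle_dec 0 h).
    + rewrite Rmin_left, Rmax_right in Hc2 by lra. rewrite !Rabs_right; lra.
    + rewrite Rmin_right, Rmax_left in Hc2 by lra. rewrite (Rabs_left h) by lra.
      rewrite Rabs_left1 by lra. lra.
Qed.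

Definition Db (d1 f2 D : R -> R) T B := forall t a b, a <= -T -> T <= b ->
  Rabs (Int (fun w => d1 (t - w) * f2 w) a b - D t) <= B * (exp a + exp (- b)).

Lemma D_exists f1 d1 f2 d2 T B : good f1 d1 T B -> good f2 d2 T B -> { D | Db d1 f2 D T B }.
Proof.
  intros G1 G2. assert (C2 := good_cont _ _ _ _ G2). assert (Tl := good_tail _ _ _ _ G2).
  destruct G1 as (_&Cd&_&_&HT&_&HB&Hd&_). destruct G2 as (_&_&_&P2&_).
  assert (forall t, exists l, forall a b, a <= -T -> T <= b ->
    Rabs (Int (fun w => d1 (t - w) * f2 w) a b - l) <= B * (exp a + exp (- b))).
  { intro t. apply impr_exists; auto.
    - apply cont_mult; auto. apply cont_comp; auto. apply cont_sub.
    - intros x Hx. rewrite Rabs_mult. specialize (Tl x Hx). rewrite Rmult_1_l in Tl.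
      apply Rmult_le_compat; auto using Rabs_pos. }
  exists (fun t => proj1_sig (constructive_indefinite_description _ (H t))).
  intros t. exact (proj2_sig (constructive_indefinite_description _ (H t))).
Qed.

Lemma conv_K f1 d1 f2 d2 T B c : good f1 d1 T B -> good f2 d2 T B -> Cb f1 f2 c T ->
  forall t a b, a <= -T - Rabs t -> T + Rabs t <= b ->
  Rabs (Int (fun w => f1 (t - w) * f2 w) a b - c t) <= exp (Rabs t) * (exp a + exp (- b)).
Proof.
  intros G1 G2 Hc t a b Ha Hb.
  assert (C1 := good_cont _ _ _ _ G1). assert (C2 := good_cont _ _ _ _ G2).
  assert (E : Int (fun w => f1 (t - w) * f2 w) a b = Int (fun v => f1 v * f2 (t - v)) (t - b) (t - a)).
  { rewrite (Int_ext (fun v => f1 v * f2 (t - v)) (fun v => (fun w => f1 (t - w) * f2 w) (t - v))).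
    - rewrite (Int_subst (fun w => f1 (t - w) * f2 w) t). f_equal; ring.
      apply cont_mult; auto. apply cont_comp; auto. apply cont_sub.
    - intro v. simpl. f_equal. f_equal. ring. }
  rewrite E. pose proof (Rle_abs t). pose proof (Rle_abs (-t)). rewrite Rabs_Ropp in H0.
  eapply Rle_trans. apply Hc; lra.
  replace (t - b) with (t + - b) by ring. replace (- (t - a)) with (-t + a) by ring.
  rewrite !exp_plus.
  assert (exp t <= exp (Rabs t)) by (apply exp_le; auto).
  assert (exp (-t) <= exp (Rabs t)) by (apply exp_le; auto).
  pose proof (exp_pos (-b)). pose proof (exp_pos a).
  assert (exp t * exp (-b) <= exp (Rabs t) * exp (-b)) by (apply Rmult_le_compat_r; lra).
  assert (exp (-t) * exp a <= exp (Rabs t) * exp a) by (apply Rmult_le_compat_r; lra).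
  lra.
Qed.

Lemma abs3 a b c : Rabs (a + b - c) <= Rabs a + Rabs b + Rabs c.
Proof. unfold Rminus. eapply Rle_trans. apply Rabs_triang. rewrite Rabs_Ropp.
  pose proof (Rabs_triang a b). lra. Qed.

Lemma cont_prod_sub f g s : cont f -> cont g -> cont (fun w => f (s - w) * g w).
Proof. intros. apply cont_mult; auto. apply cont_comp; auto. apply cont_sub. Qed.

Lemma conv_deriv f1 d1 f2 d2 T B c D : good f1 d1 T B -> good f2 d2 T B -> Cb f1 f2 c T ->
  Db d1 f2 D T B -> forall t, derivable_pt_lim c t (D t).
Proof.
  intros G1 G2 Hc HD t eps Heps.
  assert (C1 := good_cont _ _ _ _ G1). assert (C2 := good_cont _ _ _ _ G2).
  assert (Tl2 := good_tail _ _ _ _ G2).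
  assert (HK := conv_K _ _ _ _ _ _ _ G1 G2 Hc).
  destruct G1 as (Df1&Cd&_&_&HT&_&HB&Hd&_). destruct G2 as (_&_&_&P2&_).
  destruct (exp_small (4*B) (eps/4) (Rmax T 1)) as [R0 [HR0 [HR0p HR0s]]]; try lra.
  pose proof (Rmax_l T 1); pose proof (Rmax_r T 1).
  assert (He' : 0 < eps / (8 * R0)) by (apply Rdiv_lt_0_compat; lra).
  destruct (Heine d1 (fun x => t - R0 - 1 <= x <= t + R0 + 1) (compact_P3 _ _) (fun x _ => Cd x) (mkposreal _ He')) as [del Hdel].
  assert (Hdp : 0 < Rmin del 1) by (apply Rmin_pos; [apply cond_pos | lra]).
  exists (mkposreal _ Hdp). intros h Hh0 Hhd. simpl in Hhd.
  assert (Hh1 : Rabs h < 1) by (eapply Rlt_le_trans; [apply Hhd| apply Rmin_r]).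
  assert (Hhdel : Rabs h < del) by (eapply Rlt_le_trans; [apply Hhd| apply Rmin_l]).
  set (beta := fun w => (f1 (t + h - w) - f1 (t - w)) / h - d1 (t - w)).
  assert (Hbeta : forall w, exists xi, beta w = d1 xi - d1 (t - w) /\ Rabs (xi - (t - w)) <= Rabs h).
  { intro w. destruct (beta_mvt f1 d1 (t - w) h Df1 Hh0) as [xi [E1 E2]]. exists xi. split; auto.
    unfold beta. replace (t + h - w) with (t - w + h) by ring. rewrite E1. auto. }
  set (phi := fun w => f2 w * beta w).
  assert (Cphi : cont phi).
  { unfold phi, beta. apply cont_mult; auto. apply cont_minus.
     - unfold Rdiv. apply cont_mult; [| apply cont_const]. apply cont_minus; apply cont_comp; auto; apply cont_sub.
     - apply cont_comp; auto; apply cont_sub. }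
  assert (Tphi : tailb phi (2*B) T).
  { intros w Hw. unfold phi. rewrite Rabs_mult. destruct (Hbeta w) as [xi [E _]]. rewrite E.
    assert (Rabs (d1 xi - d1 (t - w)) <= 2*B).
    { unfold Rminus. eapply Rle_trans. apply Rabs_triang. rewrite Rabs_Ropp.
      pose proof (Hd xi). pose proof (Hd (t + - w)). lra. }
    specialize (Tl2 w Hw). rewrite Rmult_1_l in Tl2.
    rewrite (Rmult_comm (2*B)). apply Rmult_le_compat; auto using Rabs_pos. }
  assert (Mid : forall w, -R0 <= w <= R0 -> Rabs (phi w) <= eps/(8*R0)).
  { intros w Hw. unfold phi. rewrite Rabs_mult. destruct (Hbeta w) as [xi [E E2]]. rewrite E.
    destruct (P2 w). rewrite (Rabs_right (f2 w)) by lra.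
    assert (Rabs (d1 xi - d1 (t - w)) < eps/(8*R0)).
    { pose proof E2 as E3. apply abs_le_inv in E3. apply (Hdel xi (t - w)); cbv beta; lra. }
    assert (f2 w * Rabs (d1 xi - d1 (t - w)) <= 1 * (eps/(8*R0))) by (apply Rmult_le_compat; auto using Rabs_pos; lra).
    lra. }
  assert (Main : forall X, R0 <= X -> Rabs (Int phi (-X) X) <= eps/2).
  { intros X HX.
    rewrite <- (Int_chasles phi (-X) (-R0) X Cphi), <- (Int_chasles phi (-R0) R0 X Cphi).
    pose proof (tail_left phi (2*B) T (-R0) (-X) Cphi ltac:(lra) HT Tphi ltac:(lra) ltac:(lra)).
    pose proof (tail_right phi (2*B) T R0 X Cphi ltac:(lra) HT Tphi ltac:(lra) HX).
    assert (Rabs (Int phi (-R0) R0) <= Int (fun _ => eps/(8*R0)) (-R0) R0).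
    { apply Int_abs_le; auto. apply cont_const. lra. }
    rewrite (Int_FTC (fun _ => eps/(8*R0)) (fun x => eps/(8*R0) * x)) in H3.
    2: apply cont_const.
    2: { intro x. pose proof (derivable_pt_lim_scal id (eps/(8*R0)) x 1 (derivable_pt_lim_id x)).
         rewrite Rmult_1_r in H4. exact H4. }
    specialize (HR0s R0 (Rle_refl _)).
    assert (eps/(8*R0) * R0 - eps/(8*R0) * (-R0) = eps/4) by (field; lra).
    pose proof (Rabs_triang (Int phi (- X) (- R0)) (Int phi (- R0) R0 + Int phi R0 X)).
    pose proof (Rabs_triang (Int phi (- R0) R0) (Int phi R0 X)).
    lra. }
  set (K := (2 * exp (Rabs t + 1) + 2 * exp (Rabs t)) / Rabs h + 2 * B).
  assert (Hhp : 0 < Rabs h) by (apply Rabs_pos_lt; auto).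
  assert (HK0 : 0 <= K).
  { unfold K. apply Rplus_le_le_0_compat; [|lra]. apply Rlt_le, Rdiv_lt_0_compat; auto.
    pose proof (exp_pos (Rabs t + 1)); pose proof (exp_pos (Rabs t)); lra. }
  assert (Fin : Rabs ((c (t+h) - c t)/h - D t) <= eps/2).
  { apply (le_small _ _ K (R0 + T + Rabs t + 1)); auto. intros X HX.
    pose proof (Rabs_pos t). pose proof (Rabs_pos h).
    assert (Eq : Int phi (-X) X = (Int (fun w => f1 (t + h - w) * f2 w) (-X) X - Int (fun w => f1 (t - w) * f2 w) (-X) X)/h - Int (fun w => d1 (t - w) * f2 w) (-X) X).
    { unfold phi, beta. rewrite (Int_ext _ (fun w => /h * (f1 (t + h - w) * f2 w - f1 (t - w) * f2 w) - d1 (t - w) * f2 w)).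
      - rewrite Int_minus, Int_scal, Int_minus. unfold Rdiv. ring.
        all: try apply cont_scal; try apply cont_minus; apply cont_prod_sub; auto.
      - intro w. field. auto. }
    assert (Rabs (t + h) <= Rabs t + 1) by (pose proof (Rabs_triang t h); lra).
    pose proof (HK (t+h) (-X) X ltac:(lra) ltac:(lra)) as K1.
    pose proof (HK t (-X) X ltac:(lra) ltac:(lra)) as K0.
    pose proof (HD t (-X) X ltac:(lra) ltac:(lra)) as KD.
    pose proof (Main X ltac:(lra)) as KM. rewrite Eq in KM.
    replace (- - X) with X in * by ring.
    assert (exp (Rabs (t+h)) <= exp (Rabs t + 1)) by (apply exp_le; auto).
    pose proof (exp_pos (-X)).
    set (I1 := Int (fun w => f1 (t + h - w) * f2 w) (-X) X) in *.
    set (I0 := Int (fun w => f1 (t - w) * f2 w) (-X) X) in *.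
    set (Ie := Int (fun w => d1 (t - w) * f2 w) (-X) X) in *.
    assert (Q : (c (t + h) - c t) / h - D t = ((I1 - I0) / h - Ie) + ((c (t+h) - I1) - (c t - I0)) * / h - (D t - Ie)) by (field; auto).
    rewrite Q.
    assert (A1 : Rabs (c (t + h) - I1) <= exp (Rabs t + 1) * (2 * exp (-X))).
    { rewrite Rabs_minus_sym. eapply Rle_trans. apply K1.
      apply Rmult_le_compat; try lra. apply Rlt_le, exp_pos. }
    assert (A0 : Rabs (c t - I0) <= exp (Rabs t) * (2 * exp (-X))).
    { rewrite Rabs_minus_sym. eapply Rle_trans. apply K0. lra. }
    assert (AD : Rabs (D t - Ie) <= B * (2 * exp (-X))).
    { rewrite Rabs_minus_sym. eapply Rle_trans. apply KD. lra. }
    assert (AQ : Rabs (((c (t+h) - I1) - (c t - I0)) * / h) <= (exp (Rabs t + 1) * (2 * exp (-X)) + exp (Rabs t) * (2 * exp (-X))) * / Rabs h).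
    { rewrite Rabs_mult, Rabs_inv. apply Rmult_le_compat_r. apply Rlt_le, Rinv_0_lt_compat; auto.
      unfold Rminus at 1. eapply Rle_trans. apply Rabs_triang. rewrite Rabs_Ropp. lra. }
    assert (EK : K * exp (-X) = (exp (Rabs t + 1) * (2 * exp (-X)) + exp (Rabs t) * (2 * exp (-X))) * / Rabs h + B * (2 * exp (-X))) by (unfold K; field; lra).
    rewrite EK.
    pose proof (abs3 ((I1 - I0) / h - Ie) ((c (t + h) - I1 - (c t - I0)) * / h) (D t - Ie)). lra. }
  lra.
Qed.

Lemma Int_nonpos f a b : cont f -> a <= b -> (forall x, a <= x <= b -> f x <= 0) -> Int f a b <= 0.
Proof.
  intros Hf Hab H. destruct Hab as [Hab|Hab].
  - destruct (Int_mvt f a b Hf Hab) as [c [Hc E]]. rewrite E.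
    assert (f c <= 0) by (apply H; lra). nra.
  - subst. rewrite Int_aa; auto. lra.
Qed.

Lemma good_sym_dec f d T B t u : good f d T B -> 0 < t -> 0 < u -> f (t + u) < f (t - u).
Proof.
  intros G Ht Hu. destruct (Rle_dec 0 (t - u)).
  - apply (good_dec f d T B); auto. lra.
  - assert (E : f (t - u) = f (u - t)) by (destruct G as (_&_&E&_); rewrite <- E; f_equal; ring).
    rewrite E. apply (good_dec f d T B); auto. lra.
Qed.

Lemma conv_neg f1 d1 f2 d2 T B D : good f1 d1 T B -> good f2 d2 T B -> Db d1 f2 D T B ->
  forall t, 0 < t -> D t < 0.
Proof.
  intros G1 G2 HD t Ht.
  assert (C2 := good_cont _ _ _ _ G2).
  assert (Od := fun x => good_odd _ _ _ _ x G1).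
  destruct G1 as (Df1&Cd&_&_&HT&_&HB&Hd&Hneg).
  set (phi := fun u => d1 u * f2 (t - u)).
  set (psi := fun u => d1 u * (f2 (t - u) - f2 (t + u))).
  assert (Cphi : cont phi) by (apply cont_mult; auto; apply cont_comp; auto; apply cont_sub).
  assert (Cpsi : cont psi).
  { apply cont_mult; auto. apply cont_minus; apply cont_comp; auto. apply cont_sub.
    apply cont_plus. apply cont_const. apply cont_id. }
  assert (Cphi' : cont (fun u => - d1 u * f2 (t + u))).
  { apply cont_mult. intro x; apply (continuity_pt_opp d1); auto. apply cont_comp; auto.
    apply cont_plus. apply cont_const. apply cont_id. }
  assert (psi_neg : forall u, 0 < u -> psi u < 0).
  { intros u Hu. unfold psi. pose proof (good_sym_dec _ _ _ _ t u G2 Ht Hu). specialize (Hneg u Hu).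
    apply Rmult_neg_pos; lra. }
  assert (psi_np : forall u, 0 <= u -> psi u <= 0).
  { intros u Hu. destruct Hu as [Hu|Hu]. apply Rlt_le, psi_neg; auto. subst. unfold psi.
    replace (t - 0) with (t + 0) by ring. lra. }
  destruct (Int_mvt psi 0 1 Cpsi ltac:(lra)) as [xi [Hxi Em]].
  assert (Hm : Int psi 0 1 < 0) by (rewrite Em; specialize (psi_neg xi ltac:(lra)); lra).
  apply Rle_lt_trans with (Int psi 0 1); auto.
  apply (le_small _ _ (2 * B * exp t) (Rmax T 1 + t)).
  { pose proof (exp_pos t). apply Rmult_le_pos; lra. }
  intros S HS. pose proof (Rmax_l T 1). pose proof (Rmax_r T 1).
  specialize (HD t (t - S) (t + S) ltac:(lra) ltac:(lra)).
  assert (E1 : Int (fun w => d1 (t - w) * f2 w) (t - S) (t + S) = Int phi (-S) S).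
  { rewrite (Int_ext _ (fun w => phi (t - w))).
    - rewrite (Int_subst phi t) by auto. f_equal; ring.
    - intro w. unfold phi. f_equal. f_equal. ring. }
  assert (E2 : Int phi (-S) 0 = Int (fun u => - d1 u * f2 (t + u)) 0 S).
  { rewrite (Int_ext (fun u => - d1 u * f2 (t + u)) (fun u => phi (0 - u))).
    - rewrite (Int_subst phi 0) by auto. f_equal; ring.
    - intro u. unfold phi. replace (0 - u) with (- u) by ring. rewrite Od. f_equal. f_equal. ring. }
  assert (E3 : Int phi (-S) S = Int psi 0 S).
  { rewrite <- (Int_chasles phi (-S) 0 S Cphi), E2, Rplus_comm, <- Int_plus by auto.
    apply Int_ext. intro u. unfold phi, psi. ring. }
  rewrite E1, E3 in HD. apply abs_le_inv in HD.
  rewrite <- (Int_chasles psi 0 1 S Cpsi) in HD.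
  assert (Int psi 1 S <= 0) by (apply Int_nonpos; auto; try lra; intros; apply psi_np; lra).
  assert (exp (t - S) = exp t * exp (-S)) by (rewrite <- exp_plus; f_equal; ring).
  assert (exp (- (t + S)) <= exp t * exp (-S)).
  { rewrite <- exp_plus. apply exp_le. lra. }
  assert (B * exp (- (t + S)) <= B * (exp t * exp (-S))) by (apply Rmult_le_compat_l; lra).
  rewrite H2, Rmult_plus_distr_l in HD. lra.
Qed.

Lemma conv_main f1 d1 f2 d2 T B : good f1 d1 T B -> good f2 d2 T B ->
  exists c : R -> R,
    (forall t, improper_integral_R (fun v => f1 v * f2 (t - v)) (c t)) /\
    (forall t, c (- t) = c t) /\
    (forall t, 0 < c t) /\
    (forall t, 0 < t -> exists l, derivable_pt_lim c t l /\ l < 0) /\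
    (exists g : R -> R,
       (forall t, c t = exp (- g t)) /\
       (forall t, g (- t) = g t) /\
       (forall t, 0 < t -> exists l, derivable_pt_lim g t l /\ 0 < l)).
Proof.
  intros G1 G2.
  destruct (conv_exists _ _ _ _ _ _ G1 G2) as [c Hc].
  destruct (D_exists _ _ _ _ _ _ G1 G2) as [D HD].
  assert (C1 := good_cont _ _ _ _ G1). assert (C2 := good_cont _ _ _ _ G2).
  assert (Ev := conv_even _ _ _ _ _ _ _ G1 G2 Hc).
  assert (Ps := conv_pos _ _ _ _ _ _ _ G1 G2 Hc).
  assert (Dv := conv_deriv _ _ _ _ _ _ _ _ G1 G2 Hc HD).
  assert (Ng := conv_neg _ _ _ _ _ _ _ G1 G2 HD).
  exists c. split; [|split; [|split; [|split]]]; auto.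
  - intro t. apply impr_of_bound with 1 T. apply cont_conv; auto. lra. intros; apply Hc; auto.
  - intros t Ht. exists (D t). split; auto.
  - exists (fun t => - ln (c t)). split; [|split].
    + intro t. rewrite Ropp_involutive, exp_ln; auto.
    + intro t. rewrite Ev; auto.
    + intros t Ht. exists (- (/ c t * D t)). split.
      * apply derivable_pt_lim_opp. apply (derivable_pt_lim_comp c ln). auto. apply derivable_pt_lim_ln; auto.
      * specialize (Ng t Ht). specialize (Ps t). assert (0 < / c t) by (apply Rinv_0_lt_compat; auto).
        assert (/ c t * D t < 0) by (apply Rmult_pos_neg; auto). lra.
Qed.

Definition Rep (P : R -> R) := exists (S s : R -> R) (C : R),
  (forall t, P t = exp (S t)) /\ (forall t, derivable_pt_lim S t (s t)) /\ cont s /\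
  (forall t, 0 <= t -> 0 <= s t) /\ 0 <= C /\ (forall t, Rabs (s t) <= C * Rabs t) /\
  (forall t, S (- t) = S t).

Definition lt_ (b t : R) := ln (1 + t ^ 2 / b ^ 2).
Definition st_ (b t : R) := (2 * t / b ^ 2) / (1 + t ^ 2 / b ^ 2).

Lemma b2pos b : b <> 0 -> 0 < b ^ 2.
Proof. intro H. simpl. rewrite Rmult_1_r. destruct (Rlt_or_le 0 b); [nra|]. destruct H0; [nra| congruence]. Qed.

Lemma u_nonneg b t : b <> 0 -> 0 <= t ^ 2 / b ^ 2.
Proof. intro H. unfold Rdiv. apply Rmult_le_pos. simpl. nra. apply Rlt_le, Rinv_0_lt_compat, b2pos; auto. Qed.

Lemma lt_deriv b t : b <> 0 -> derivable_pt_lim (lt_ b) t (st_ b t).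
Proof.
  intro Hb. pose proof (u_nonneg b t Hb). pose proof (b2pos b Hb).
  assert (H1 : derivable_pt_lim (fun t => 1 + t ^ 2 / b ^ 2) t (0 + (INR 2 * t ^ Nat.pred 2 * / b ^ 2 + t ^ 2 * 0))).
  { apply derivable_pt_lim_plus. apply derivable_pt_lim_const. unfold Rdiv.
    apply (derivable_pt_lim_mult (fun t => t ^ 2) (fun _ => / b ^ 2)). apply derivable_pt_lim_pow. apply derivable_pt_lim_const. }
  unfold lt_, st_. replace (2 * t / b ^ 2 / (1 + t ^ 2 / b ^ 2)) with (/ (1 + t ^ 2 / b ^ 2) * (0 + (INR 2 * t ^ Nat.pred 2 * / b ^ 2 + t ^ 2 * 0))).
  - apply (derivable_pt_lim_comp (fun t => 1 + t ^ 2 / b ^ 2) ln); auto. apply derivable_pt_lim_ln. lra.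
  - simpl. field. split; auto. simpl in H0. unfold Rdiv in H. simpl in H. assert (0 <= t * t) by nra. nra.
Qed.

Lemma st_cont b : b <> 0 -> cont (st_ b).
Proof.
  intros Hb x. pose proof (u_nonneg b x Hb). unfold st_.
  apply continuity_pt_div.
  - apply derivable_continuous_pt. unfold Rdiv. apply derivable_pt_mult. apply derivable_pt_scal, derivable_pt_id. apply derivable_pt_const.
  - apply derivable_continuous_pt. apply derivable_pt_plus. apply derivable_pt_const. unfold Rdiv.
    apply derivable_pt_mult. apply derivable_pt_pow. apply derivable_pt_const.
  - lra.
Qed.

Lemma st_nonneg b t : b <> 0 -> 0 <= t -> 0 <= st_ b t.
Proof.
  intros Hb Ht. pose proof (u_nonneg b t Hb). pose proof (b2pos b Hb). unfold st_, Rdiv.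
  apply Rmult_le_pos. apply Rmult_le_pos. lra. apply Rlt_le, Rinv_0_lt_compat; auto.
  apply Rlt_le, Rinv_0_lt_compat; lra.
Qed.

Lemma st_bound b t : b <> 0 -> Rabs (st_ b t) <= 2 / b ^ 2 * Rabs t.
Proof.
  intros Hb. pose proof (u_nonneg b t Hb). pose proof (b2pos b Hb). unfold st_.
  unfold Rdiv. rewrite !Rabs_mult, Rabs_inv, (Rabs_inv (1 + _)).
  rewrite (Rabs_right 2), (Rabs_right (b^2)), (Rabs_right (1 + _)) by lra.
  assert (0 < / (1 + t ^ 2 * / b ^ 2) <= 1).
  { split. apply Rinv_0_lt_compat. unfold Rdiv in H; lra. rewrite <- Rinv_1. apply Rinv_le_contravar; unfold Rdiv in H; lra. }
  pose proof (Rabs_pos t). assert (0 < / b ^ 2) by (apply Rinv_0_lt_compat; auto).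
  assert (0 <= 2 * Rabs t * / b ^ 2) by (apply Rmult_le_pos; lra).
  replace (2 * / b ^ 2 * Rabs t) with (2 * Rabs t * / b ^ 2 * 1) by ring.
  apply Rmult_le_compat_l; lra.
Qed.

Lemma lt_even b t : lt_ b (- t) = lt_ b t.
Proof. unfold lt_. f_equal. f_equal. f_equal. ring. Qed.

Lemma exp_lt b t : b <> 0 -> exp (lt_ b t) = 1 + t ^ 2 / b ^ 2.
Proof. intro Hb. pose proof (u_nonneg b t Hb). unfold lt_. apply exp_ln. lra. Qed.

Lemma Rep_ext P Q : (forall t, P t = Q t) -> Rep Q -> Rep P.
Proof.
  intros E (S&s&C&H1&H2&H3&H4&H5&H6&H7). exists S, s, C. repeat split; auto.
  intro t. rewrite E; auto.
Qed.

Lemma Rep_one : Rep (fun _ => 1).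
Proof.
  exists (fun _ => 0), (fun _ => 0), 0. repeat split.
  - intro; rewrite exp_0; auto.
  - intro; apply derivable_pt_lim_const.
  - apply cont_const.
  - intros; lra.
  - lra.
  - intro t. rewrite Rabs_R0. lra.
Qed.

Lemma Rep_cons b Q : b <> 0 -> Rep Q -> Rep (fun t => (1 + t ^ 2 / b ^ 2) * Q t).
Proof.
  intros Hb (S&s&C&H1&H2&H3&H4&H5&H6&H7).
  pose proof (b2pos b Hb).
  exists (fun t => lt_ b t + S t), (fun t => st_ b t + s t), (2 / b ^ 2 + C). repeat split.
  - intro t. rewrite exp_plus, exp_lt, H1; auto.
  - intro t. apply derivable_pt_lim_plus; auto. apply lt_deriv; auto.
  - apply cont_plus; auto. apply st_cont; auto.
  - intros t Ht. pose proof (st_nonneg b t Hb Ht). pose proof (H4 t Ht). lra.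
  - assert (0 < 2 / b ^ 2) by (apply Rdiv_lt_0_compat; lra). lra.
  - intro t. eapply Rle_trans. apply Rabs_triang. pose proof (st_bound b t Hb). pose proof (H6 t). lra.
  - intro t. rewrite lt_even, H7. auto.
Qed.

Lemma Rep_finite P : finite_prod_data P -> Rep P.
Proof.
  intros [l [Hl E]]. eapply Rep_ext. apply E. clear E P.
  induction Hl.
  - apply Rep_one.
  - simpl. apply Rep_cons; auto.
Qed.

Lemma cv_const c : Un_cv (fun _ => c) c.
Proof. intros e He. exists 0%nat. intros. unfold Rdist. rewrite Rminus_diag, Rabs_R0; auto. Qed.

Lemma cv_shift u l : Un_cv u l -> Un_cv (fun n => u (S n)) l.
Proof. intros H e He. destruct (H e He) as [N HN]. exists N. intros n Hn. apply HN. lia. Qed.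

Lemma pp_ge1 beta t N : (forall n, beta n <> 0) -> 1 <= partial_prod beta t N.
Proof.
  intro Hb. induction N; cbn [partial_prod]. lra. pose proof (u_nonneg (beta N) t (Hb N)).
  assert (1 * 1 <= partial_prod beta t N * (1 + t ^ 2 / beta N ^ 2)) by (apply Rmult_le_compat; lra). lra.
Qed.

Lemma pp_exp beta t N : (forall n, beta n <> 0) ->
  partial_prod beta t (S N) = exp (sum_f_R0 (fun k => lt_ (beta k) t) N).
Proof.
  intro Hb. induction N.
  - cbn [partial_prod sum_f_R0]. rewrite exp_lt; auto. ring.
  - change (partial_prod beta t (S (S N))) with (partial_prod beta t (S N) * (1 + t ^ 2 / beta (S N) ^ 2)).
    rewrite IHN. cbn [sum_f_R0]. rewrite exp_plus, exp_lt; auto.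
Qed.

Lemma pp_even beta t N : partial_prod beta (- t) N = partial_prod beta t N.
Proof. induction N; cbn [partial_prod]; auto. rewrite IHN. f_equal. f_equal. f_equal. ring. Qed.

Lemma ln_cont x : 0 < x -> continuity_pt ln x.
Proof. intro H. apply derivable_continuous_pt. exists (/ x). apply derivable_pt_lim_ln; auto. Qed.

Lemma sum_lt_deriv beta N y : (forall n, beta n <> 0) ->
  derivable_pt_lim (fun t => sum_f_R0 (fun k => lt_ (beta k) t) N) y (SP (fun n t => st_ (beta n) t) N y).
Proof.
  intro Hb. induction N; cbn [SP sum_f_R0].
  - apply lt_deriv; auto.
  - apply derivable_pt_lim_plus; auto. apply lt_deriv; auto.
Qed.

Lemma Rep_infinite P : infinite_prod_data P -> Rep P.
Proof.
  intros [beta [Hb [[s0 Hs0] HP]]].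
  set (fn' := fun n t => st_ (beta n) t).
  assert (Hpos : forall n, 0 <= / beta n ^ 2) by (intro n; apply Rlt_le, Rinv_0_lt_compat, b2pos; auto).
  assert (Hs0p : 0 <= s0).
  { apply (@Rle_cv_lim (fun _ => 0) (sum_f_R0 (fun n => / beta n ^ 2)) 0 s0). intro n; apply cond_pos_sum; auto. apply cv_const. auto. }
  assert (P1 : forall t, 1 <= P t).
  { intro t. apply (@Rle_cv_lim (fun _ => 1) (partial_prod beta t) 1 (P t)). intro; apply pp_ge1; auto. apply cv_const. auto. }
  assert (Sconv : forall t, Un_cv (fun N => sum_f_R0 (fun k => lt_ (beta k) t) N) (ln (P t))).
  { intro t. eapply Un_cv_ext.
    2: { apply continuity_seq. apply ln_cont. pose proof (P1 t); lra. apply cv_shift, HP. }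
    intro n. cbv beta. rewrite pp_exp, ln_exp; auto. }
  assert (HC : CVN_R fn').
  { intro r. exists (fun n => 2 * r / beta n ^ 2). exists (2 * r * s0). split.
    - eapply Un_cv_ext.
      2: { apply (CV_mult (fun _ => 2 * r) (sum_f_R0 (fun n => / beta n ^ 2))). apply cv_const. auto. }
      intro n. cbv beta. rewrite scal_sum. apply sum_eq. intros i _. rewrite Rabs_right. unfold Rdiv. ring.
      apply Rle_ge. unfold Rdiv. apply Rmult_le_pos; auto. pose proof (cond_pos r); lra.
    - intros n y Hy. unfold Boule in Hy. rewrite Rminus_0_r in Hy. unfold fn'.
      eapply Rle_trans. apply st_bound; auto.
      replace (2 * r / beta n ^ 2) with (2 / beta n ^ 2 * r) by (unfold Rdiv; ring).
      apply Rmult_le_compat_l. unfold Rdiv. specialize (Hpos n). lra. lra. }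
  set (cv := CVN_R_CVS fn' HC).
  exists (fun t => ln (P t)), (SFL fn' cv), (2 * s0). repeat split.
  - intro t. rewrite exp_ln; auto. pose proof (P1 t); lra.
  - intro x. assert (Hr : 0 < Rabs x + 1) by (pose proof (Rabs_pos x); lra).
    apply (CVU_derivable (fun N t => sum_f_R0 (fun k => lt_ (beta k) t) N) (fun n => SP fn' n) _ _ 0 (mkposreal _ Hr)).
    + apply CVN_CVU. apply HC.
    + intros y _. apply Sconv.
    + intros n y _. apply sum_lt_deriv; auto.
    + unfold Boule. simpl. rewrite Rminus_0_r. lra.
  - intro x. apply SFL_continuity. apply HC. intro n. intro y. apply st_cont; auto.
  - intros t Ht. unfold SFL. destruct (cv t) as [l Hl].
    apply (@Rle_cv_lim (fun _ => 0) _ _ _ (fun N => cond_pos_sum _ N (fun k => st_nonneg (beta k) t (Hb k) Ht)) (cv_const 0) Hl).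
  - lra.
  - intro t. unfold SFL. destruct (cv t) as [l Hl].
    replace (Rabs l) with (Rabs (0 - l)) by (rewrite Rminus_0_l, Rabs_Ropp; auto).
    apply (cv_bound _ _ 0 _ 0 Hl). intros n _. rewrite Rminus_0_l, Rabs_Ropp.
    unfold SP. eapply Rle_trans. apply sum_f_R0_triangle.
    eapply Rle_trans. apply (sum_Rle _ (fun k => / beta k ^ 2 * (2 * Rabs t))).
    { intros k _. unfold fn'. replace (/ beta k ^2 * (2 * Rabs t)) with (2 / beta k ^ 2 * Rabs t) by (unfold Rdiv; ring). apply st_bound; auto. }
    rewrite <- (scal_sum (fun k => / beta k ^ 2) n (2 * Rabs t)).
    pose proof (sum_incr _ n _ Hs0 Hpos). pose proof (Rabs_pos t).
    replace (2 * s0 * Rabs t) with (2 * Rabs t * s0) by ring. apply Rmult_le_compat_l; lra.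
  - intro t. f_equal. apply (UL_sequence (partial_prod beta (- t))); auto.
    eapply Un_cv_ext. 2: apply HP. intro n. rewrite pp_even; auto.
Qed.

Lemma Rpower_ge y a : 1 <= y -> 0 < a -> y <= Rpower y (2 + a).
Proof.
  intros Hy Ha. unfold Rpower.
  assert (0 <= ln y). { destruct Hy as [Hy|Hy]. rewrite <- ln_1. left; apply ln_increasing; lra. subst; rewrite ln_1; lra. }
  rewrite <- (exp_ln y) at 1 by lra. apply exp_le. nra.
Qed.

Lemma Ybounds Y : 0 <= Y -> Y * exp (- Y) <= 1 /\ Y ^ 2 * exp (- Y) <= 4.
Proof.
  intro HY. rewrite exp_Ropp. pose proof (exp_pos Y). pose proof (exp_ineq1_le Y).
  pose proof (exp_ineq1_le (Y/2)). pose proof (exp_pos (Y/2)).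
  assert (E : exp Y = exp (Y/2) * exp (Y/2)) by (rewrite <- exp_plus; f_equal; field).
  split.
  - apply Rmult_le_reg_r with (exp Y); auto. rewrite Rmult_assoc, Rinv_l by lra. lra.
  - apply Rmult_le_reg_r with (exp Y); auto. rewrite Rmult_assoc, Rinv_l by lra.
    rewrite E. simpl. nra.
Qed.

Lemma pow_even_nonneg t m : 0 <= t ^ (2 * m).
Proof. rewrite pow_mult. apply pow_le. simpl. nra. Qed.

Lemma pow_even_opp t m : (- t) ^ (2 * m) = t ^ (2 * m).
Proof. rewrite !pow_mult. f_equal. ring. Qed.

Lemma dmult f g x lf lg : derivable_pt_lim f x lf -> derivable_pt_lim g x lg ->
  derivable_pt_lim (fun y => f y * g y) x (lf * g x + f x * lg).
Proof. intros. exact (derivable_pt_lim_mult f g x lf lg H H0). Qed.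
Lemma dcomp f g x lf lg : derivable_pt_lim f x lf -> derivable_pt_lim g (f x) lg ->
  derivable_pt_lim (fun y => g (f y)) x (lg * lf).
Proof. intros. exact (derivable_pt_lim_comp f g x lf lg H H0). Qed.
Lemma dscal c f x l : derivable_pt_lim f x l -> derivable_pt_lim (fun y => c * f y) x (c * l).
Proof. intros. exact (derivable_pt_lim_scal f c x l H). Qed.
Lemma dopp f x l : derivable_pt_lim f x l -> derivable_pt_lim (fun y => - f y) x (- l).
Proof. intros. exact (derivable_pt_lim_opp f x l H). Qed.
Lemma cont_pow j : cont (fun t => t ^ j).
Proof. intro x. apply derivable_continuous_pt. exists (INR j * x ^ Nat.pred j). apply derivable_pt_lim_pow. Qed.

Lemma good_of_ctx q : as_in_context q -> exists d T B, good (fun x => exp (- q x)) d T B.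
Proof.
  intros (k&mu&m&P&Hk&Hmu&Hm&HPd&Hq&T0&alpha&HT0&Ha&Htail).
  assert (HR : Rep P) by (destruct HPd; [apply Rep_finite|apply Rep_infinite]; auto).
  destruct HR as (S&s&C&HPS&HS&Cs&Hs0&HC&HsC&HSe).
  set (n := (2*m)%nat).
  set (E := fun t => mu * t ^ 2 + S t).
  set (e := fun t => mu * (INR 2 * t ^ Nat.pred 2) + s t).
  assert (DE : forall t, derivable_pt_lim E t (e t)).
  { intro t. unfold E, e. apply (derivable_pt_lim_plus (fun t => mu * t ^ 2) S); auto.
    apply dscal. apply derivable_pt_lim_pow. }
  set (Q := fun t => k * t ^ n * exp (E t)).
  assert (EqQ : q = Q).
  { apply functional_extensionality; intro t. rewrite Hq. unfold Q, E, n. rewrite HPS, exp_plus. ring. }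
  rewrite EqQ in Htail |- *. clear EqQ Hq q.
  set (Q' := fun t => k * (INR n * t ^ Nat.pred n) * exp (E t) + k * t ^ n * (exp (E t) * e t)).
  assert (DQ : forall t, derivable_pt_lim Q t (Q' t)).
  { intro t. unfold Q, Q'. apply (dmult (fun t => k * t ^ n) (fun t => exp (E t))).
    - apply dscal. apply derivable_pt_lim_pow.
    - apply (dcomp E exp). auto. apply derivable_pt_lim_exp. }
  set (d := fun t => exp (- Q t) * - Q' t).
  assert (Dd : forall t, derivable_pt_lim (fun x => exp (- Q x)) t (d t)).
  { intro t. unfold d. apply (dcomp (fun x => - Q x) exp). apply dopp; auto. apply derivable_pt_lim_exp. }
  assert (CE : cont E) by (apply (cont_deriv E e); auto).
  assert (Ce : cont e).
  { unfold e. apply cont_plus; auto. apply cont_scal. apply cont_scal. apply cont_pow. }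
  assert (CQ : cont Q) by (apply (cont_deriv Q Q'); auto).
  assert (CQ' : cont Q').
  { unfold Q'. apply cont_plus.
    - apply cont_mult. apply cont_scal, cont_scal, cont_pow. apply cont_comp; auto. apply cont_exp.
    - apply cont_mult. apply cont_scal, cont_pow. apply cont_mult; auto. apply cont_comp; auto. apply cont_exp. }
  assert (Cd : cont d).
  { unfold d. apply cont_mult. apply cont_comp. apply cont_exp. intro x; apply (continuity_pt_opp Q); auto.
    intro x; apply (continuity_pt_opp Q'); auto. }
  assert (Qnn : forall t, 0 <= Q t).
  { intro t. unfold Q, n. apply Rmult_le_pos. apply Rmult_le_pos. lra. apply pow_even_nonneg. apply Rlt_le, exp_pos. }
  assert (Qev : forall t, Q (- t) = Q t).
  { intro t. unfold Q, E, n. rewrite pow_even_opp, HSe. f_equal. f_equal. f_equal. ring. }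
  assert (Qabs : forall t, Q (Rabs t) = Q t).
  { intro t. destruct (Rcase_abs t). rewrite Rabs_left, Qev; auto. rewrite Rabs_right; auto. }
  set (Tq := Rmax T0 1).
  assert (HTq1 : 1 <= Tq) by apply Rmax_r. assert (HTq0 : T0 <= Tq) by apply Rmax_l.
  assert (Qge : forall x, Tq <= Rabs x -> Rabs x <= Q x).
  { intros x Hx. rewrite <- Qabs. specialize (Htail (Rabs x) ltac:(lra)).
    pose proof (Rpower_ge (Rabs x) alpha ltac:(lra) Ha). lra. }
  assert (Bd : forall x, Tq <= Rabs x -> Rabs (d x) <= INR n + 4 * (2 * mu + C)).
  { intros x Hx. pose proof (Qge x Hx) as HY. set (Y := Q x) in *.
    assert (Hx1 : 1 <= Rabs x) by lra.
    assert (Hxn : Rabs x ^ n = x ^ n) by (rewrite RPow_abs; apply Rabs_right, Rle_ge; unfold n; apply pow_even_nonneg).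
    assert (Hpn : Rabs x ^ Nat.pred n <= Rabs x ^ n) by (apply Rle_pow; auto; lia).
    pose proof (exp_pos (E x)) as HEp. pose proof (pos_INR n) as Hnp.
    assert (HYd : Y = k * Rabs x ^ n * exp (E x)) by (unfold Y, Q; rewrite Hxn; auto).
    assert (A1 : Rabs (k * (INR n * x ^ Nat.pred n) * exp (E x)) <= INR n * Y).
    { rewrite !Rabs_mult, <- RPow_abs, (Rabs_right k), (Rabs_right (INR n)), (Rabs_right (exp (E x))) by lra.
      rewrite HYd.
      assert (INR n * Rabs x ^ Nat.pred n <= INR n * Rabs x ^ n) by (apply Rmult_le_compat_l; lra).
      assert (k * (INR n * Rabs x ^ Nat.pred n) <= k * (INR n * Rabs x ^ n)) by (apply Rmult_le_compat_l; lra).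
      assert (k * (INR n * Rabs x ^ Nat.pred n) * exp (E x) <= k * (INR n * Rabs x ^ n) * exp (E x)) by (apply Rmult_le_compat_r; lra).
      lra. }
    assert (He : Rabs (e x) <= (2 * mu + C) * Y).
    { unfold e. replace (INR 2 * x ^ Nat.pred 2) with (2 * x) by (simpl; ring).
      eapply Rle_trans. apply Rabs_triang. rewrite !Rabs_mult, (Rabs_right mu), (Rabs_right 2) by lra.
      pose proof (HsC x). pose proof (Rabs_pos x).
      assert ((2 * mu + C) * Rabs x <= (2 * mu + C) * Y) by (apply Rmult_le_compat_l; lra). lra. }
    assert (A2 : Rabs (k * x ^ n * (exp (E x) * e x)) <= Y * ((2 * mu + C) * Y)).
    { replace (k * x ^ n * (exp (E x) * e x)) with (Y * e x) by (unfold Y, Q; ring).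
      rewrite Rabs_mult, Rabs_right by lra. apply Rmult_le_compat_l; lra. }
    assert (AQ : Rabs (Q' x) <= INR n * Y + (2 * mu + C) * Y ^ 2).
    { unfold Q'. eapply Rle_trans. apply Rabs_triang. simpl. lra. }
    destruct (Ybounds Y ltac:(lra)) as [Y1 Y2].
    unfold d. rewrite Rabs_mult, Rabs_Ropp, (Rabs_right (exp _)) by (apply Rle_ge, Rlt_le, exp_pos).
    fold Y. pose proof (exp_pos (- Y)).
    assert (exp (- Y) * Rabs (Q' x) <= exp (- Y) * (INR n * Y + (2 * mu + C) * Y ^ 2)) by (apply Rmult_le_compat_l; lra).
    assert (INR n * (Y * exp (- Y)) <= INR n * 1) by (apply Rmult_le_compat_l; lra).
    assert ((2 * mu + C) * (Y ^ 2 * exp (- Y)) <= (2 * mu + C) * 4) by (apply Rmult_le_compat_l; lra).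
    assert (exp (- Y) * (INR n * Y + (2 * mu + C) * Y ^ 2) = INR n * (Y * exp (- Y)) + (2 * mu + C) * (Y ^ 2 * exp (- Y))) by ring.
    lra. }
  assert (Cad : forall c, continuity_pt (fun x => Rabs (d x)) c).
  { intro c. apply (continuity_pt_comp d Rabs); auto. apply Rcontinuity_abs. }
  destruct (continuity_ab_maj (fun x => Rabs (d x)) (- Tq) Tq ltac:(lra) (fun c _ => Cad c)) as [Mx [HMx _]].
  exists d, Tq, (Rmax (Rabs (d Mx)) (INR n + 4 * (2 * mu + C))).
  repeat split.
  - auto.
  - auto.
  - intro x. rewrite Qev. auto.
  - apply exp_pos.
  - rewrite <- exp_0. apply exp_le. specialize (Qnn x). lra.
  - lra.
  - intros x Hx. apply exp_le. specialize (Qge x Hx). lra.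
  - eapply Rle_trans. 2: apply Rmax_l. apply Rabs_pos.
  - intro x. destruct (Rle_dec Tq (Rabs x)).
    + eapply Rle_trans. apply Bd; auto. apply Rmax_r.
    + eapply Rle_trans. 2: apply Rmax_l. apply HMx. apply abs_le_inv. lra.
  - intros u Hu. unfold d. assert (0 < Q' u).
    { unfold Q'. assert (0 < k * (INR n * u ^ Nat.pred n) * exp (E u)).
      { apply Rmult_lt_0_compat; [|apply exp_pos]. apply Rmult_lt_0_compat; auto.
        apply Rmult_lt_0_compat. apply lt_0_INR. unfold n; lia. apply pow_lt; auto. }
      assert (0 <= k * u ^ n * (exp (E u) * e u)).
      { apply Rmult_le_pos. apply Rmult_le_pos. lra. apply pow_le; lra.
        apply Rmult_le_pos. apply Rlt_le, exp_pos. unfold e. replace (INR 2 * u ^ Nat.pred 2) with (2 * u) by (simpl; ring).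
        pose proof (Hs0 u ltac:(lra)). nra. }
      lra. }
    pose proof (exp_pos (- Q u)). nra.
Qed.

Theorem mainTheorem6 (q1 q2 : R -> R) :
  as_in_context q1 -> as_in_context q2 ->
  exists c : R -> R,
    (forall t, improper_integral_R
                 (fun v => exp (- q1 v) * exp (- q2 (t - v))) (c t)) /\
    (forall t, c (- t) = c t) /\
    (forall t, 0 < c t) /\
    (forall t, 0 < t -> exists l, derivable_pt_lim c t l /\ l < 0) /\
    (exists g : R -> R,
       (forall t, c t = exp (- g t)) /\
       (forall t, g (- t) = g t) /\
       (forall t, 0 < t -> exists l, derivable_pt_lim g t l /\ 0 < l)).
Proof.
  intros H1 H2.
  destruct (good_of_ctx q1 H1) as (d1&T1&B1&G1).
  destruct (good_of_ctx q2 H2) as (d2&T2&B2&G2).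
  apply (conv_main (fun x => exp (- q1 x)) d1 (fun x => exp (- q2 x)) d2 (Rmax T1 T2) (Rmax B1 B2)).
  - apply good_mono with T1 B1; auto; apply Rmax_l.
  - apply good_mono with T2 B2; auto; apply Rmax_r.
Qed.
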